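(* Let $W\in L^\infty$ and $\lambda=(\lambda_1,\dots,\lambda_T)\in\mathbb{R}_+^T\setminus\{0\}$. (a) If $(X_t)_{t\in\mathbb{T}}\in\mathcal{A}(W)$ solves Problem $\mathrm{P}_\lambda$, then $(\lambda_t u_t'(\tilde X_t))_{t\in\mathbb{T}}$ is an $(\mathcal{F}_t)$-martingale. (b) If Problem $\mathrm{P}_\lambda$ has a solution, then $\lambda\in(0,\infty)^T$.
   Context: Let $T\ge 1$ be an integer and $\mathbb{T}=\{1,\dots,T\}$. Let $(\Omega,\mathcal{F},(\mathcal{F}_t)_{t\in\{0,1,\dots,T\}},P)$ be a filtered probability space and $L^{\infty}=L^{\infty}(\Omega,\mathcal{F}_T,P)$. Let $(r_t)_{t\in\mathbb{T}}$ be a bounded, nonnegative, predictable process ($r_t$ is $\mathcal{F}_{t-1}$-measurable), $B_0=1$, $B_t=\prod_{k=1}^t(1+r_k)$, and for a process $(X_t)$ write $\tilde X_t=X_t/B_t$. For $W\in L^\infty$, $\mathcal{A}(W)$ is the set of $(\mathcal{F}_t)$-adapted processes $(Y_t)_{t\in\mathbb{T}}$ with $Y_t\in L^\infty$ for all $t$ and $\sum_{t\in\mathbb{T}}\tilde Y_t=W$ a.s. For each $t\in\mathbb{T}$, $u_t:\mathbb{R}\to\mathbb{R}$ is strictly concave, $C^1$, with $u_t'(x)>0$ for all $x$. For $\lambda\in\mathbb{R}_+^T\setminus\{0\}$, Problem $\mathrm{P}_\lambda$ is: maximize $\sum_{t\in\mathbb{T}}\lambda_tE[u_t(\tilde Y_t)]$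 over $(Y_t)\in\mathcal{A}(W)$; a solution is an element of $\mathcal{A}(W)$ attaining the maximum. *)

(* Defs.v *)
From HB Require Import structures.
From mathcomp Require Import all_boot all_order all_algebra.
From mathcomp Require Import all_classical all_reals all_analysis.
Set Implicit Arguments. Unset Strict Implicit. Unset Printing Implicit Defensive.
Import Order.TTheory GRing.Theory Num.Theory.
Import numFieldNormedType.Exports.
Local Open Scope classical_set_scope.
Local Open Scope ring_scope.

Section Defs.
Context {d : measure_display} {Omega : measurableType d} {R : realType}.

Definition sub_sigma (G : set (set Omega)) :=
  sigma_algebra setT G /\ G `<=` measurable.

Definition filtration (T : nat) (F : nat -> set (set Omega)) :=
  (forall t, (t <= T)%N -> sub_sigma (F t)) /\
  (forall s t, (s <= t <= T)%N -> F s `<=` F t).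

Definition meas_wrt (G : set (set Omega)) (f : Omega -> R) :=
  forall B : set R, measurable B -> G (f @^-1` B).

Definition Linfty (P : probability Omega R) (G : set (set Omega))
  (f : Omega -> R) :=
  meas_wrt G f /\ exists M : R, {ae P, forall w, `|f w| <= M}.

Definition bank (r : nat -> Omega -> R) (t : nat) (w : Omega) : R :=
  \prod_(1 <= k < t.+1) (1 + r k w).

Definition disc (r : nat -> Omega -> R) (X : nat -> Omega -> R)
  (t : nat) (w : Omega) : R := X t w / bank r t w.

Definition admissible (P : probability Omega R) (T : nat)
  (F : nat -> set (set Omega)) (r : nat -> Omega -> R) (W : Omega -> R)
  (Y : nat -> Omega -> R) :=
  (forall t, (1 <= t <= T)%N -> meas_wrt (F t) (Y t)) /\
  (forall t, (1 <= t <= T)%N -> Linfty P (F T) (Y t)) /\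
  {ae P, forall w, \sum_(1 <= t < T.+1) disc r Y t w = W w}.

Definition objective (P : probability Omega R) (T : nat)
  (r : nat -> Omega -> R) (u : nat -> R -> R) (lam : nat -> R)
  (Y : nat -> Omega -> R) : \bar R :=
  (\sum_(1 <= t < T.+1)
     (lam t)%:E * \int[P]_w (u t (disc r Y t w))%:E)%E.

Definition solves (P : probability Omega R) (T : nat)
  (F : nat -> set (set Omega)) (r : nat -> Omega -> R) (W : Omega -> R)
  (u : nat -> R -> R) (lam : nat -> R) (X : nat -> Omega -> R) :=
  admissible P T F r W X /\
  forall Y, admissible P T F r W Y ->
    (objective P T r u lam Y <= objective P T r u lam X)%E.

(** (M_t)_{t in {1..T}} is an (F_t)-martingale under P:
    adapted, integrable, and E[M_t | F_s] = M_s for 1 <= s <= t <= T,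
    the conditional expectation being expressed by its defining property. *)
Definition martingale (P : probability Omega R) (T : nat)
  (F : nat -> set (set Omega)) (M : nat -> Omega -> R) :=
  (forall t, (1 <= t <= T)%N -> meas_wrt (F t) (M t)) /\
  (forall t, (1 <= t <= T)%N -> P.-integrable setT (EFin \o M t)) /\
  (forall s t, (1 <= s)%N -> (s <= t <= T)%N -> forall A, F s A ->
     (\int[P]_(w in A) (M t w)%:E = \int[P]_(w in A) (M s w)%:E)%E).

End Defs.

Definition strictly_concave {R : realType} (f : R -> R) :=
  forall x y : R, x != y -> forall a : R, 0 < a < 1 ->
    a * f x + (1 - a) * f y < f (a * x + (1 - a) * y).

(* Main.v *)
Require Import Defs.
From HB Require Import structures.
From mathcomp Require Import all_boot all_order all_algebra.
From mathcomp Require Import all_classical all_reals all_analysis.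
From mathcomp Require Import ring lra measurable_realfun.
Import Order.TTheory GRing.Theory Num.Theory.
Import numFieldNormedType.Exports.
Local Open Scope classical_set_scope.
Local Open Scope ring_scope.

Lemma sum_ind1 (R : realType) (T s : nat) (f : nat -> R) : (1 <= s <= T)%N ->
  \sum_(1 <= k < T.+1) (k == s)%:R * f k = f s.
Proof.
elim: T => [|T IH]; first by case: s => //= -[].
rewrite big_nat_recr //= => /andP[s1 sT].
case: (ltngtP s T.+1) sT => // [sT _|-> _].
- by rewrite IH ?s1 // mul0r addr0.
- rewrite mul1r big1_seq ?add0r // => k /andP[_]; rewrite mem_index_iota => /andP[_ kT].
  by rewrite ltn_eqF // mul0r.
Qed.

Lemma mwP d (Omega : measurableType d) (R : realType) (G : set (set Omega))
  (f : Omega -> R) : sigma_algebra setT G ->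
  meas_wrt G f <-> measurable_fun (setT : set (g_sigma_algebraType G)) f.
Proof.
move=> sG; split.
- by move=> mf _ B mB; rewrite setTI; apply: sub_gen_smallest; exact: mf.
- move=> mf B mB; have := mf measurableT B mB; rewrite setTI => h.
  by rewrite -[G](sigma_algebra_id sG).
Qed.

Arguments mwP {d Omega R G f}.

Lemma mw_amb d (Omega : measurableType d) (R : realType) (G : set (set Omega))
  (f : Omega -> R) : sub_sigma G -> meas_wrt G f -> measurable_fun setT f.
Proof. by move=> [_ sG] mf _ B mB; rewrite setTI; apply: sG; exact: mf. Qed.

Lemma mw_mono d (Omega : measurableType d) (R : realType) (G H : set (set Omega))
  (f : Omega -> R) : G `<=` H -> meas_wrt G f -> meas_wrt H f.
Proof. by move=> GH mf B mB; apply: GH; exact: mf. Qed.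

Lemma ae_le_Rint d (Omega : measurableType d) (R : realType)
  (mu : {measure set Omega -> \bar R}) (f g : Omega -> R) :
  mu.-integrable setT (EFin \o f) -> mu.-integrable setT (EFin \o g) ->
  {ae mu, forall w, f w <= g w} ->
  \int[mu]_(w in setT) f w <= \int[mu]_(w in setT) g w.
Proof.
move=> If Ig [N [mN N0 sN]].
rewrite /Rintegral (negligible_integral mN measurableT If N0) (negligible_integral mN measurableT Ig N0).
have IfN := integrableS measurableT (measurableD measurableT mN) (@subDsetl _ _ _) If.
have IgN := integrableS measurableT (measurableD measurableT mN) (@subDsetl _ _ _) Ig.
have mD := measurableD measurableT mN.
apply: (fine_le (integrable_fin_num mD IfN) (integrable_fin_num mD IgN)).
apply: le_integral => // w; rewrite inE => -[_ Nw]; rewrite lee_fin.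
by apply: contrapT => fg; apply: Nw; apply: sN.
Qed.
Lemma int_bdd d (Omega : measurableType d) (R : realType)
  (mu : probability Omega R) (f : Omega -> R) (M : R) :
  measurable_fun setT f -> {ae mu, forall w, `|f w| <= M} ->
  mu.-integrable setT (EFin \o f).
Proof.
move=> mf hM; apply/integrableP; split; first exact/measurable_EFinP.
apply: (@le_lt_trans _ _ (\int[mu]_(w in setT) (cst `|M|%:E) w)%E).
- apply: ae_ge0_le_integral => //.
  + apply: measurableT_comp => //; exact/measurable_EFinP.
  + by move=> w _; rewrite /= lee_fin.
  + apply: (filterS _ hM) => w hw _ /=; rewrite lee_fin.
    exact: le_trans hw (ler_norm _).
- have h1 : mu setT = 1%E by exact: probability_setT.
  rewrite integral_cst //; set m := (X in (_ * X < _)%E).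
  have -> : m = 1%E by exact: h1.
  by rewrite mule1 ltry.
Qed.

Lemma cont_bdd (R : realType) (f : R -> R) : continuous f ->
  forall a b : R, exists C, forall y, a <= y <= b -> `|f y| <= C.
Proof.
move=> cf a b; case: (leP a b) => ab; last first.
  by exists 0 => y /andP[ay yb]; have := le_trans ay yb; rewrite leNgt ab.
have cfab : {within `[a, b], continuous f} by exact: continuous_subspaceT.
have [c1 c1ab h1] := EVT_max ab cfab.
have [c2 c2ab h2] := EVT_min ab cfab.
exists (`|f c1| + `|f c2|) => y yab.
have yin : y \in `[a, b] by rewrite in_itv /=.
have := h1 _ yin; have := h2 _ yin.
have := ler_norm (f c1).
have /andP[+ _] : - `|f c2| <= f c2 <= `|f c2| by rewrite -ler_norml.
have := normr_ge0 (f c1); have := normr_ge0 (f c2).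
rewrite ler_norml; lra.
Qed.

Lemma cont_pos_lb (R : realType) (f : R -> R) : continuous f ->
  (forall x, 0 < f x) ->
  forall a b : R, exists2 m, 0 < m & forall y, a <= y <= b -> m <= f y.
Proof.
move=> cf fp a b; case: (leP a b) => ab; last first.
  by exists 1 => // y /andP[ay yb]; have := le_trans ay yb; rewrite leNgt ab.
have cfab : {within `[a, b], continuous f} by exact: continuous_subspaceT.
have [c2 c2ab h2] := EVT_min ab cfab.
by exists (f c2) => // y yab; apply: h2; rewrite in_itv /=.
Qed.
Lemma ucont (R : realType) (f : R -> R) : continuous f ->
  forall (a b eta : R), 0 < eta -> exists2 del, 0 < del &
    forall x z, a <= x <= b -> `|z - x| <= del -> `|f z - f x| <= eta.
Proof.
move=> cf a b eta eta0.
have /compact_near_coveringP cov := @segment_compact R a b.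
pose P := fun (i : R) (x : R) => forall z, `|z - x| <= `|i| -> `|f z - f x| <= eta.
have : \forall i \near nbhs (0:R), `[a, b] `<=` P i.
apply: cov; move=> x _.
have [rho rho0 hrho] : exists2 rho : R, 0 < rho &
    forall w, `|x - w| < rho -> `|f x - f w| < eta / 2.
  have /cvgrPdist_lt /(_ (eta / 2)) : f @ x --> f x := cf x.
  move=> /(_ ltac:(lra)) /nbhs_ballP[rho /= rho0 h].
  by exists rho => // w xw; apply: h; rewrite /ball /=.
exists (ball x (rho / 2), ball 0 (rho / 2)).
  split; apply: nbhsx_ballx; lra.
case=> x' i [/= bx bi] z zx.
move: bx bi; rewrite /ball /= sub0r normrN => bx bi.
have h1 : `|x - z| < rho.
  have := ler_normD (x - x') (x' - z).
  rewrite (_ : x - x' + (x' - z) = x - z); last by ring.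
  rewrite (distrC x' z); lra.
have h2 := hrho _ h1.
have h3 : `|f x - f x'| < eta / 2.
  by apply: hrho; apply: lt_trans bx _; lra.
have := ler_normD (f z - f x) (f x - f x').
rewrite (_ : f z - f x + (f x - f x') = f z - f x'); last by ring.
rewrite (distrC (f z) (f x)); lra.
move=> /nbhs_ballP[e /= e0 he].
exists (e / 2); first lra.
move=> x z xab zx; apply: (he (e / 2)).
  by rewrite /ball /= sub0r normrN gtr0_norm; lra.
  by rewrite /= in_itv /=.
by rewrite (gtr0_norm (_ : 0 < e / 2)) //; lra.
Qed.

Lemma mvt_bd (R : realType) (u : R -> R) : (forall x, derivable u x 1) ->
  continuous (derive1 u) ->
  forall M eta : R, 0 < eta -> exists2 del, 0 < del &
  forall x h, `|x| <= M -> `|h| <= del ->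
    `|u (x + h) - u x - h * derive1 u x| <= `|h| * eta.
Proof.
move=> hd hc M eta eta0.
have [del del0 hdel] := @ucont R (derive1 u) hc (- M) M eta eta0.
exists del => // x h xM hdl.
have xin : - M <= x <= M by rewrite -ler_norml.
have cu : continuous u.
  by move=> y; apply: differentiable_continuous; exact/derivable1_diffP.
have dd : forall y : R, is_derive y (1:R) u (derive1 u y).
  by move=> y; rewrite derive1E; exact: derivableP.
case: (ltgtP h 0) => [hn|hp|->]; last first.
- by rewrite addr0 mul0r subr0 subrr normr0 mul0r.
- have [c] := @MVT R u (derive1 u) x (x + h) ltac:(lra) (fun y _ => dd y)
    (continuous_subspaceT cu).
  rewrite in_itv /= => /andP[c1 c2] e.
  rewrite (_ : u (x + h) = u x + derive1 u c * (x + h - x)); last first.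
    by rewrite -e; ring.
  rewrite (_ : _ - _ - _ = h * (derive1 u c - derive1 u x)); last by ring.
  rewrite normrM ler_wpM2l //; apply: hdel => //.
  move: hdl; rewrite gtr0_norm // => hdl.
  rewrite ler_norml; lra.
- have [c] := @MVT R u (derive1 u) (x + h) x ltac:(lra) (fun y _ => dd y)
    (continuous_subspaceT cu).
  rewrite in_itv /= => /andP[c1 c2] e.
  rewrite (_ : u (x + h) = u x - derive1 u c * (x - (x + h))); last first.
    by rewrite -e; ring.
  rewrite (_ : _ - _ - _ = h * (derive1 u c - derive1 u x)); last by ring.
  rewrite normrM ler_wpM2l //; apply: hdel => //.
  move: hdl; rewrite ltr0_norm // => hdl.
  rewrite ler_norml; lra.
Qed.
Lemma hinv_cont (R : realType) : continuous (fun v : R => (Num.max v 1)^-1).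
Proof.
move=> v.
apply: (@continuous_comp _ _ _ (fun v : R => Num.max v 1) GRing.inv).
  apply: (@continuous_max _ _ id (cst 1)) => //; exact: cst_continuous.
apply: inv_continuous; apply: lt0r_neq0; rewrite lt_max ltr01 orbT //.
Qed.

Lemma mw_cst d (Omega : measurableType d) (R : realType) (G : set (set Omega)) (c : R) :
  sigma_algebra setT G -> meas_wrt G (fun _ => c).
Proof. by move=> sG; apply/mwP => //; exact: measurable_cst. Qed.

Lemma mw_add d (Omega : measurableType d) (R : realType) (G : set (set Omega)) (f g : Omega -> R) :
  sigma_algebra setT G -> meas_wrt G f -> meas_wrt G g -> meas_wrt G (fun w => f w + g w).
Proof. by move=> sG /(mwP sG) mf /(mwP sG) mg; apply/mwP => //; exact: measurable_funD. Qed.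

Lemma mw_mul d (Omega : measurableType d) (R : realType) (G : set (set Omega)) (f g : Omega -> R) :
  sigma_algebra setT G -> meas_wrt G f -> meas_wrt G g -> meas_wrt G (fun w => f w * g w).
Proof. by move=> sG /(mwP sG) mf /(mwP sG) mg; apply/mwP => //; exact: measurable_funM. Qed.

Lemma mw_comp d (Omega : measurableType d) (R : realType) (G : set (set Omega)) (f : Omega -> R) (h : R -> R) :
  sigma_algebra setT G -> continuous h -> meas_wrt G f -> meas_wrt G (fun w => h (f w)).
Proof.
move=> sG ch /(mwP sG) mf; apply/mwP => //.
exact: (measurableT_comp (continuous_measurable_fun ch) mf).
Qed.

Lemma mw_indic d (Omega : measurableType d) (R : realType) (G : set (set Omega)) (A : set Omega) :
  sigma_algebra setT G -> G A -> meas_wrt G (\1_A : Omega -> R).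
Proof.
move=> sG GA; apply/mwP => //.
apply: (@measurable_indic _ (g_sigma_algebraType G)).
by apply: sub_gen_smallest.
Qed.

Lemma mw_div d (Omega : measurableType d) (R : realType) (G : set (set Omega)) (f g : Omega -> R) :
  sigma_algebra setT G -> meas_wrt G f -> meas_wrt G g -> (forall w, 1 <= g w) ->
  meas_wrt G (fun w => f w / g w).
Proof.
move=> sG mf mg g1.
have : meas_wrt G (fun w => f w * (Num.max (g w) 1)^-1).
  apply: mw_mul => //; apply: (@mw_comp _ _ _ _ g (fun v => (Num.max v 1)^-1)) => //; exact: hinv_cont.
move=> h B mB; have := h B mB.
congr G; apply/funext => w /=; apply/propext.
by rewrite max_l // g1.
Qed.
Lemma bank_ge1 d (Omega : measurableType d) (R : realType) (r : nat -> Omega -> R) t w :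
  (forall k, (1 <= k <= t)%N -> 0 <= r k w) -> 1 <= bank r t w.
Proof.
rewrite /bank; elim: t => [|t IH] h; first by rewrite big_geq.
rewrite big_nat_recr //=; apply: mulr_ege1.
  by apply: IH => k /andP[k1 kt]; apply: h; rewrite k1 ltnW.
have := h t.+1 (leqnn _); lra.
Qed.

Lemma bank_le d (Omega : measurableType d) (R : realType) (r : nat -> Omega -> R) t w K :
  (forall k, (1 <= k <= t)%N -> 0 <= r k w /\ r k w <= K) ->
  bank r t w <= (1 + K) ^+ t.
Proof.
rewrite /bank; elim: t => [|t IH] h; first by rewrite big_geq // expr0.
rewrite big_nat_recr //= exprSr.
have [h1 h2] := h t.+1 (leqnn _).
have b1 : 1 <= \prod_(1 <= i < t.+1) (1 + r i w).
  apply: (@bank_ge1 d Omega R r t w) => k /andP[k1 kt].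
  by case: (h k); rewrite ?k1 ?(leqW kt).
apply: ler_pM.
- lra.
- lra.
- by apply: IH => k /andP[k1 kt]; apply: h; rewrite k1 (leqW kt).
- lra.
Qed.

Lemma bank_meas d (Omega : measurableType d) (R : realType) (T : nat)
  (F : nat -> set (set Omega)) (r : nat -> Omega -> R) :
  filtration T F ->
  (forall t, (1 <= t <= T)%N -> meas_wrt (F t.-1) (r t)) ->
  forall t, (t <= T)%N -> meas_wrt (F t) (bank r t).
Proof.
move=> [hs hm] hr; elim=> [|t IH] tT.
  have -> : bank r 0 = fun _ => 1 by apply/funext => w; rewrite /bank big_geq.
  by apply: mw_cst; case: (hs 0%N isT).
have sG : sigma_algebra setT (F t.+1) by case: (hs t.+1 tT).
have FtF : F t `<=` F t.+1 by apply: hm; rewrite leqnSn tT.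
have -> : bank r t.+1 = fun w => bank r t w * (1 + r t.+1 w).
  by apply/funext => w; rewrite /bank big_nat_recr.
apply: mw_mul => //.
  by apply: mw_mono FtF _; apply: IH; exact: ltnW.
apply: mw_add => //; first exact: mw_cst.
by apply: mw_mono FtF _; exact: (hr t.+1).
Qed.
Lemma int_u d (Omega : measurableType d) (R : realType) (P : probability Omega R)
  (g : R -> R) (h : Omega -> R) (M : R) : continuous g ->
  measurable_fun setT h -> {ae P, forall w, `|h w| <= M} ->
  P.-integrable setT (EFin \o (fun w => g (h w))).
Proof.
move=> cg mh hM; have [C hC] := @cont_bdd R g cg (- M) M.
apply: (@int_bdd _ _ _ P _ C).
  exact: (measurableT_comp (continuous_measurable_fun cg) mh).
by apply: (filterS _ hM) => w hw; apply: hC; rewrite -ler_norml.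
Qed.

Lemma disc_props d (Omega : measurableType d) (R : realType) (P : probability Omega R)
  (T : nat) (F : nat -> set (set Omega)) (r : nat -> Omega -> R) :
  filtration T F ->
  (forall t, (1 <= t <= T)%N -> meas_wrt (F t.-1) (r t)) ->
  (forall t w, (1 <= t <= T)%N -> 0 <= r t w) ->
  forall W Y, admissible P T F r W Y ->
  forall k, (1 <= k <= T)%N ->
  meas_wrt (F k) (disc r Y k) /\ exists M, {ae P, forall w, `|disc r Y k w| <= M}.
Proof.
move=> hF hr hr0 W Y hY k /andP[k1 kT].
have sG : sigma_algebra setT (F k) by case: (hF.1 k kT).
have b1 : forall w, 1 <= bank r k w.
  move=> w; apply: (@bank_ge1 d Omega R r k w) => j /andP[j1 jk]; apply: hr0.
  by rewrite j1 (leq_trans jk kT).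
split.
  apply: mw_div => //; first by apply: hY.1; rewrite k1 kT.
  exact: (@bank_meas d Omega R T F r hF hr k kT).
have [_ [M hM]] := hY.2.1 k ltac:(by rewrite k1 kT).
exists M; apply: (filterS _ hM) => w hw.
have bw := b1 w.
rewrite /disc normrM normfV (ger0_norm (_ : 0 <= bank r k w)); last lra.
rewrite ler_pdivrMr; last lra.
have := normr_ge0 (Y k w); nra.
Qed.

Lemma Rint_cstP d (Omega : measurableType d) (R : realType) (P : probability Omega R) (c : R) :
  \int[P]_(w in setT) c = c.
Proof.
rewrite Rintegral_cst //; set m := (X in _ * X).
have -> : m = 1; last by rewrite mulr1.
rewrite /m; have h1 : P setT = 1%E by exact: probability_setT.
by set p := (X in fine X); have -> : p = 1%E by exact: h1.
Qed.

Lemma side d (Omega : measurableType d) (R : realType) (P : probability Omega R)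
  (a : R -> R) (x : Omega -> R) (M : R) (A : set Omega) (eta : R) :
  (forall y, derivable a y 1) -> continuous (derive1 a) ->
  measurable_fun setT x -> {ae P, forall w, `|x w| <= M} -> measurable A ->
  0 < eta ->
  exists2 del, 0 < del & forall e, `|e| <= del ->
   e * \int[P]_(w in A) derive1 a (x w) - `|e| * eta <=
   \int[P]_(w in setT) (a (x w + e * \1_A w) - a (x w)).
Proof.
move=> hd hc mx hM mA eta0.
have [del del0 hdel] := @mvt_bd R a hd hc M eta eta0.
exists del => // e he.
have ca : continuous a.
  by move=> y; apply: differentiable_continuous; exact/derivable1_diffP.
have mI : measurable_fun setT (\1_A : Omega -> R) by exact: measurable_indic.
have I1 : P.-integrable setT (EFin \o (fun w => a (x w + e * \1_A w))).
  apply: (@int_u _ _ _ P a _ (M + `|e|) ca).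
    by apply: measurable_funD => //; apply: measurable_funM => //; exact: measurable_cst.
  apply: (filterS _ hM) => w hw.
  have : `|\1_A w : R| <= 1 by rewrite indicE; case: (w \in A); rewrite ?normr1 ?normr0.
  move=> h1; have := ler_normD (x w) (e * \1_A w); rewrite normrM.
  have := normr_ge0 e; have := normr_ge0 (\1_A w : R); nra.
have I2 : P.-integrable setT (EFin \o (fun w => a (x w))) by exact: int_u hM.
have [C hC] := @cont_bdd R _ hc (- M) M.
have I3 : P.-integrable setT (EFin \o (fun w => \1_A w * derive1 a (x w))).
  apply: (@int_bdd _ _ _ P _ C).
    apply: measurable_funM => //.
    exact: (measurableT_comp (continuous_measurable_fun hc) mx).
  apply: (filterS _ hM) => w hw; rewrite normrM.
  have h2 := hC (x w) ltac:(by rewrite -ler_norml).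
  rewrite indicE; case: (w \in A); rewrite ?normr1 ?normr0 ?mul1r ?mul0r //.
  exact: le_trans (normr_ge0 _) h2.
have I4 : P.-integrable setT (EFin \o (fun w => e * (\1_A w * derive1 a (x w)) - `|e| * eta)).
  apply: (@int_bdd _ _ _ P _ (`|e| * C + `|e| * eta)).
    apply: measurable_funB; last exact: measurable_cst.
    apply: measurable_funM; first exact: measurable_cst.
    apply: measurable_funM => //.
    exact: (measurableT_comp (continuous_measurable_fun hc) mx).
  apply: (filterS _ hM) => w hw.
  have h2 := hC (x w) ltac:(by rewrite -ler_norml).
  have h3 : `|\1_A w * derive1 a (x w)| <= C.
    rewrite normrM indicE; case: (w \in A); rewrite ?normr1 ?normr0 ?mul1r ?mul0r //.
    exact: le_trans (normr_ge0 _) h2.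
  apply: le_trans (ler_normB _ _) _; rewrite normrM (normrM `|e|) normr_id.
  rewrite (gtr0_norm eta0); have := normr_ge0 e; nra.
have IA : \int[P]_(w in A) derive1 a (x w) = \int[P]_(w in setT) (\1_A w * derive1 a (x w)).
  rewrite Rintegral_mkcond; apply: eq_Rintegral => w _.
  by rewrite patchE indicE; case: (w \in A); rewrite ?mul1r ?mul0r.
have I5 : P.-integrable setT (EFin \o (fun w : Omega => `|e| * eta)).
  by apply: (@int_bdd _ _ _ P _ (Num.norm (Num.norm e * eta))) => //; exact: aeW.
have I6 : P.-integrable setT (EFin \o (fun w => a (x w + e * \1_A w) - a (x w))).
  apply: eq_integrable (integrableB measurableT I1 I2) => //.
have I7 : P.-integrable setT (EFin \o (fun w => e * (\1_A w * derive1 a (x w)))).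
  by apply: eq_integrable (integrableZl measurableT e I3) => // w _ /=; rewrite EFinM.
rewrite IA -RintegralZl //.
have -> : `|e| * eta = \int[P]_(w in setT) (`|e| * eta) by rewrite Rint_cstP.
rewrite -RintegralB //.
apply: ae_le_Rint => //.
apply: (filterS _ hM) => w hw.
have := hdel (x w) e hw he.
rewrite indicE; case: (w \in A); rewrite ?mulr1 ?mulr0 ?mul1r ?mul0r ?addr0 ?subrr.
  rewrite ler_norml => /andP[h1 h2]; lra.
by move=> _; have := normr_ge0 e; nra.
Qed.

Arguments disc_props {d Omega R P T F r}.
Arguments int_u {d Omega R P g h M}.
Arguments side {d Omega R P a x M A eta}.
Arguments bank_meas {d Omega R T F r}.
Arguments mw_amb {d Omega R G f}.
Arguments int_bdd {d Omega R mu f M}.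
Arguments ae_le_Rint {d Omega R mu f g}.
Lemma le_eps (R : realType) (x L : R) : 0 <= L ->
  (forall eta, 0 < eta -> `|x| <= L * eta) -> x = 0.
Proof.
move=> L0 h; apply/eqP; apply: contraT => x0.
have xp : 0 < `|x| by rewrite normr_gt0.
have L1 : 0 < L + 1 by lra.
have := h (`|x| / (L + 1)) (divr_gt0 xp L1).
have : L * `|x| / (L + 1) < `|x| by rewrite ltr_pdivrMr //; nra.
rewrite mulrA; lra.
Qed.

Lemma nb (R : realType) (b : bool) : `|b%:R : R| <= 1.
Proof. by case: b; rewrite ?normr1 ?normr0 ?ler01. Qed.

Lemma obj_eq d (Omega : measurableType d) (R : realType) (P : probability Omega R)
  (T : nat) (F : nat -> set (set Omega)) (r : nat -> Omega -> R) :
  filtration T F ->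
  (forall t, (1 <= t <= T)%N -> meas_wrt (F t.-1) (r t)) ->
  (forall t w, (1 <= t <= T)%N -> 0 <= r t w) ->
  forall (u : nat -> R -> R), (forall t, (1 <= t <= T)%N -> continuous (u t)) ->
  forall W lam Y, admissible P T F r W Y ->
  objective P T r u lam Y =
  (\sum_(1 <= k < T.+1) lam k * \int[P]_(w in setT) u k (disc r Y k w))%:E.
Proof.
move=> hF hr hr0 u cu W lam Y hY.
rewrite /objective -sumEFin; apply: eq_big_nat => k hk.
have [mY [M hM]] := disc_props hF hr hr0 _ _ hY _ hk.
have kT : (k <= T)%N by case/andP: hk.
have Ik := int_u (cu k hk) (mw_amb (hF.1 k kT) mY) hM.
rewrite EFinM /Rintegral fineK //. exact: integrable_fin_num.
Qed.
Lemma key d (Omega : measurableType d) (R : realType) (P : probability Omega R)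
  (T : nat) (F : nat -> set (set Omega)) (r : nat -> Omega -> R) (K : R) :
  filtration T F ->
  (forall t, (1 <= t <= T)%N -> meas_wrt (F t.-1) (r t)) ->
  (forall t w, (1 <= t <= T)%N -> 0 <= r t w) ->
  (forall t w, (1 <= t <= T)%N -> `|r t w| <= K) ->
  forall (u : nat -> R -> R),
  (forall t, (1 <= t <= T)%N -> forall x, derivable (u t) x 1) ->
  (forall t, (1 <= t <= T)%N -> continuous (derive1 (u t))) ->
  forall W lam X, (forall t, (1 <= t <= T)%N -> 0 <= lam t) ->
  solves P T F r W u lam X ->
  forall s t A, (1 <= s)%N -> (s < t)%N -> (t <= T)%N -> F s A ->
  lam t * \int[P]_(w in A) derive1 (u t) (disc r X t w) =
  lam s * \int[P]_(w in A) derive1 (u s) (disc r X s w).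
Proof.
move=> hF hr hr0 hK u hd hc W lam X hl0 [hXa hXopt] s t A s1 st tT FA.
have sT : (s <= T)%N by apply: ltnW; exact: leq_trans st tT.
have hs : (1 <= s <= T)%N by rewrite s1 sT.
have ht : (1 <= t <= T)%N by rewrite tT (leq_trans s1 (ltnW st)).
have mA : measurable A by apply: (hF.1 s sT).2.
have cu : forall k, (1 <= k <= T)%N -> continuous (u k).
  move=> k hk y; apply: differentiable_continuous; exact/derivable1_diffP/hd.
have [mxs [Ms hMs]] := disc_props hF hr hr0 _ _ hXa _ hs.
have [mxt [Mt hMt]] := disc_props hF hr hr0 _ _ hXa _ ht.
have mxs' := mw_amb (hF.1 s sT) mxs.
have mxt' := mw_amb (hF.1 t tT) mxt.
pose c k : R := (k == s)%:R - (k == t)%:R.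
pose Y (e : R) k w := X k w + bank r k w * (e * (\1_A w * c k)).
have b1 : forall k w, (k <= T)%N -> 1 <= bank r k w.
  move=> k w kT; apply: bank_ge1 => j /andP[j1 jk]; apply: hr0.
  by rewrite j1 (leq_trans jk kT).
have D1 : forall e k w, (k <= T)%N ->
    disc r (Y e) k w = disc r X k w + e * (\1_A w * c k).
  move=> e k w kT; rewrite /disc /Y; field.
  by have := b1 k w kT; apply: contraL => /eqP ->; rewrite ler10.
have c0 : forall k, (k < s)%N -> c k = 0.
  move=> k ks; rewrite /c (ltn_eqF ks) (ltn_eqF (ltn_trans ks st)).
  by rewrite subrr.
have mc : forall k, (k <= T)%N -> meas_wrt (F k) (fun w => \1_A w * c k).
  move=> k kT; have sGk : sigma_algebra setT (F k) by case: (hF.1 k kT).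
  case: (leqP s k) => sk.
    apply: mw_mul => //; last exact: mw_cst.
    by apply: mw_indic => //; apply: (hF.2 s k _ A FA); rewrite sk kT.
  rewrite c0 //; have -> : (fun w => \1_A w * 0) = (fun _ : Omega => 0 : R).
    by apply/funext => w; rewrite mulr0.
  exact: mw_cst.
have cb : forall k, `|c k| <= 2.
  by move=> k; apply: le_trans (ler_normB _ _) _; have := nb R (k == s); have := nb R (k == t); lra.
have mY : forall e k, (1 <= k <= T)%N -> meas_wrt (F k) (Y e k).
  move=> e k hk; have kT : (k <= T)%N by case/andP: hk.
  have sGk : sigma_algebra setT (F k) by case: (hF.1 k kT).
  apply: mw_add => //; first exact: hXa.1.
  apply: mw_mul => //; first exact: (bank_meas hF hr k kT).
  by apply: mw_mul => //; [exact: mw_cst| exact: mc].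
have adm : forall e, admissible P T F r W (Y e).
  move=> e; split; [exact: mY|split].
  - move=> k hk; have kT : (k <= T)%N by case/andP: hk.
    split; first by apply: mw_mono (mY e k hk); apply: hF.2; rewrite kT leqnn.
    have [_ [Mk hMk]] := hXa.2.1 k hk.
    exists (Mk + (1 + K) ^+ k * (`|e| * 2)); apply: (filterS _ hMk) => w hw.
    have hB1 := b1 k w kT.
    have hB2 : bank r k w <= (1 + K) ^+ k.
      apply: bank_le => j /andP[j1 jk]; have hj : (1 <= j <= T)%N by rewrite j1 (leq_trans jk kT).
      by split; [exact: hr0|exact: ler_normlW (hK j w hj)].
    have hz : `|e * (\1_A w * c k)| <= `|e| * 2.
      rewrite !normrM; apply: ler_wpM2l => //.
      have := nb R (w \in A); rewrite -indicE => h1.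
      have := cb k; have := normr_ge0 (c k); have := normr_ge0 (\1_A w : R); nra.
    apply: le_trans (ler_normD _ _) _; rewrite normrM (ger0_norm (_ : 0 <= bank r k w)); last lra.
    have := normr_ge0 (e * (\1_A w * c k)); have := normr_ge0 e; nra.
  - apply: (filterS _ hXa.2.2) => w hw; rewrite -hw.
    rewrite (eq_big_nat _ _ (fun k hk => D1 e k w (ltnSE (proj2 (andP hk))))).
    rewrite big_split /= -mulr_sumr -mulr_sumr.
    rewrite (_ : \sum_(1 <= i < T.+1) c i = 0) ?mulr0 ?addr0 //.
    rewrite /c sumrB.
    under eq_bigr do rewrite -[(_ == s)%:R]mulr1.
    under [X in _ - X]eq_bigr do rewrite -[(_ == t)%:R]mulr1.
    by rewrite (@sum_ind1 R T s (fun=> 1) hs) (@sum_ind1 R T t (fun=> 1) ht) subrr.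
have intY : forall e k, (1 <= k <= T)%N ->
    P.-integrable setT (EFin \o (fun w => u k (disc r (Y e) k w))).
  move=> e k hk; have kT : (k <= T)%N by case/andP: hk.
  have [m [M hM]] := disc_props hF hr hr0 _ _ (adm e) _ hk.
  exact: int_u (cu k hk) (mw_amb (hF.1 k kT) m) hM.
have intX : forall k, (1 <= k <= T)%N ->
    P.-integrable setT (EFin \o (fun w => u k (disc r X k w))).
  move=> k hk; have kT : (k <= T)%N by case/andP: hk.
  have [m [M hM]] := disc_props hF hr hr0 _ _ hXa _ hk.
  exact: int_u (cu k hk) (mw_amb (hF.1 k kT) m) hM.
pose RY e k := \int[P]_(w in setT) u k (disc r (Y e) k w).
pose RX k := \int[P]_(w in setT) u k (disc r X k w).
have hopt : forall e, \sum_(1 <= k < T.+1) lam k * RY e k <= \sum_(1 <= k < T.+1) lam k * RX k.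
  move=> e; have := hXopt (Y e) (adm e).
  rewrite (@obj_eq _ _ _ P T F r hF hr hr0 u cu W lam (Y e) (adm e)).
  by rewrite (@obj_eq _ _ _ P T F r hF hr hr0 u cu W lam X hXa) lee_fin.
have dec : forall e, \sum_(1 <= k < T.+1) lam k * RY e k - \sum_(1 <= k < T.+1) lam k * RX k
    = lam s * (RY e s - RX s) + lam t * (RY e t - RX t).
  move=> e; rewrite -sumrB.
  rewrite (eq_big_nat _ _ (F2 := fun k => (k == s)%:R * (lam s * (RY e s - RX s))
      + (k == t)%:R * (lam t * (RY e t - RX t)))).
    by rewrite big_split /= (@sum_ind1 R T s _ hs) (@sum_ind1 R T t _ ht).
  move=> k hk; have kT : (k <= T)%N by rewrite -ltnS; case/andP: hk.
  case: (eqVneq k s) => [->|ks].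
    by rewrite ?eqxx ?(ltn_eqF st) mul1r mul0r addr0 mulrBr.
  case: (eqVneq k t) => [->|kt].
    by rewrite ?eqxx ?(gtn_eqF st) mul0r add0r mul1r mulrBr.
  rewrite ?(negbTE ks) ?(negbTE kt) !mul0r addr0.
  have -> : RY e k = RX k.
    rewrite /RY /RX; apply: eq_Rintegral => w _.
    by rewrite D1 // /c (negbTE ks) (negbTE kt) subrr !mulr0 addr0.
  by rewrite subrr.
have Ds : forall e, RY e s - RX s =
    \int[P]_(w in setT) (u s (disc r X s w + e * \1_A w) - u s (disc r X s w)).
  move=> e; rewrite /RY /RX -RintegralB //; [|exact: intY|exact: intX].
  apply: eq_Rintegral => w _; rewrite D1 // /c eqxx (ltn_eqF st) /=.
  by rewrite subr0 mulr1.
have Dt : forall e, RY e t - RX t =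
    \int[P]_(w in setT) (u t (disc r X t w + (- e) * \1_A w) - u t (disc r X t w)).
  move=> e; rewrite /RY /RX -RintegralB //; [|exact: intY|exact: intX].
  apply: eq_Rintegral => w _; rewrite D1 // /c eqxx (gtn_eqF st) /=.
  by rewrite sub0r mulrN1 mulNr mulrN.
set Is := \int[P]_(w in A) derive1 (u s) (disc r X s w).
set It := \int[P]_(w in A) derive1 (u t) (disc r X t w).
have l1 := hl0 s hs; have l2 := hl0 t ht.
have main : forall eta, 0 < eta ->
    `|lam t * It - lam s * Is| <= (lam s + lam t) * eta.
  move=> eta eta0.
  have [ds ds0 hds] := side (hd s hs) (hc s hs) mxs' hMs mA eta0.
  have [dt dt0 hdt] := side (hd t ht) (hc t ht) mxt' hMt mA eta0.
  pose del := Num.min ds dt.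
  have del0 : 0 < del by rewrite lt_min ds0 dt0.
  have dds : del <= ds by rewrite ge_min lexx.
  have ddt : del <= dt by rewrite ge_min lexx orbT.
  have H1 : forall e, `|e| <= del ->
      e * (lam s * Is - lam t * It) - `|e| * ((lam s + lam t) * eta) <= 0.
    move=> e he; have := hopt e; rewrite -subr_le0 dec Ds Dt => h.
    have h1 := hds e (le_trans he dds).
    have h2 := hdt (- e) ltac:(by rewrite normrN; exact: le_trans he ddt).
    rewrite normrN in h2.
    have := ler_wpM2l l1 h1; have := ler_wpM2l l2 h2.
    rewrite /Is /It; lra.
  have hd0 : `|del| = del by rewrite ger0_norm // ltW.
  have h1 := H1 del ltac:(by rewrite hd0).
  have h2 := H1 (- del) ltac:(by rewrite normrN hd0).
  rewrite normrN hd0 in h2; rewrite hd0 in h1.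
  rewrite ler_norml; apply/andP; split; nra.
have := @le_eps R _ _ (addr_ge0 l1 l2) main.
lra.
Qed.
Lemma int_fine d (Omega : measurableType d) (R : realType) (P : probability Omega R)
  (A : set Omega) (f : Omega -> R) : measurable A ->
  P.-integrable setT (EFin \o f) ->
  (\int[P]_(w in A) (f w)%:E)%E = (\int[P]_(w in A) f w)%:E.
Proof.
move=> mA If; rewrite /Rintegral fineK //; apply: integrable_fin_num => //.
exact: integrableS If.
Qed.

Arguments int_fine {d Omega R P A f}.

Theorem lemma2p11 (d : measure_display) (Omega : measurableType d)
  (R : realType) (P : probability Omega R) (T : nat) (hT : (1 <= T)%N)
  (F : nat -> set (set Omega)) (hF : filtration T F)
  (r : nat -> Omega -> R)
  (hr_pred : forall t, (1 <= t <= T)%N -> meas_wrt (F t.-1) (r t))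
  (hr_nonneg : forall t w, (1 <= t <= T)%N -> 0 <= r t w)
  (hr_bdd : exists K : R, forall t w, (1 <= t <= T)%N -> `|r t w| <= K)
  (u : nat -> R -> R)
  (hu_conc : forall t, (1 <= t <= T)%N -> strictly_concave (u t))
  (hu_der : forall t, (1 <= t <= T)%N -> forall x, derivable (u t) x 1)
  (hu_C1 : forall t, (1 <= t <= T)%N -> continuous (derive1 (u t)))
  (hu_pos : forall t, (1 <= t <= T)%N -> forall x, 0 < derive1 (u t) x)
  (W : Omega -> R) (hW : Linfty P (F T) W)
  (lam : nat -> R)
  (hlam_nonneg : forall t, (1 <= t <= T)%N -> 0 <= lam t)
  (hlam_nz : exists2 t, (1 <= t <= T)%N & lam t != 0) :
  (forall X, solves P T F r W u lam X ->
     martingale P T F (fun t w => lam t * derive1 (u t) (disc r X t w))) /\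
  ((exists X, solves P T F r W u lam X) ->
     forall t, (1 <= t <= T)%N -> 0 < lam t).
Proof.
have [K hK] := hr_bdd.
have cg : forall t, (1 <= t <= T)%N -> continuous (fun y => lam t * derive1 (u t) y).
  move=> t ht y; apply: cvgM; [exact: cvg_cst|exact: hu_C1].
have intD : forall X, solves P T F r W u lam X -> forall t, (1 <= t <= T)%N ->
    P.-integrable setT (EFin \o (fun w => derive1 (u t) (disc r X t w))).
  move=> X [hXa _] t ht; have tT : (t <= T)%N by case/andP: ht.
  have [m [M hM]] := disc_props hF hr_pred hr_nonneg _ _ hXa _ ht.
  exact: int_u (hu_C1 t ht) (mw_amb (hF.1 t tT) m) hM.
have intM : forall X, solves P T F r W u lam X -> forall t, (1 <= t <= T)%N ->
    P.-integrable setT (EFin \o (fun w => lam t * derive1 (u t) (disc r X t w))).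
  move=> X [hXa _] t ht; have tT : (t <= T)%N by case/andP: ht.
  have [m [M hM]] := disc_props hF hr_pred hr_nonneg _ _ hXa _ ht.
  exact: int_u (cg t ht) (mw_amb (hF.1 t tT) m) hM.
split.
  move=> X hX; have [hXa _] := hX; split; [|split].
  - move=> t ht; have tT : (t <= T)%N by case/andP: ht.
    have sG : sigma_algebra setT (F t) by case: (hF.1 t tT).
    have [m _] := disc_props hF hr_pred hr_nonneg _ _ hXa _ ht.
    apply: mw_mul => //; first exact: mw_cst.
    exact: (@mw_comp _ _ _ (F t) (disc r X t) (derive1 (u t)) sG (hu_C1 t ht) m).
  - exact: intM.
  - move=> s t s1 /andP[st tT] A FA.
    have sT : (s <= T)%N := leq_trans st tT.
    have mA : measurable A by apply: (hF.1 s sT).2.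
    have hs : (1 <= s <= T)%N by rewrite s1 sT.
    have ht : (1 <= t <= T)%N by rewrite tT (leq_trans s1 st).
    have [lst|est] : (s < t)%N \/ s = t.
      by case: (ltngtP s t) st => [h _|h|h _]; [left|done|right].
    2: by rewrite est.
    rewrite (int_fine mA (intM X hX t ht)) (int_fine mA (intM X hX s hs)).
    have iAt := integrableS measurableT mA (@subsetT _ A) (intD X hX t ht).
    have iAs := integrableS measurableT mA (@subsetT _ A) (intD X hX s hs).
    have E := (@key d Omega R P T F r K hF hr_pred hr_nonneg hK u hu_der hu_C1 W lam X hlam_nonneg hX s t A s1 lst tT FA).
    rewrite -(RintegralZl _ mA iAt) -(RintegralZl _ mA iAs) in E.
    by rewrite E.
move=> [X hX] t ht.
have [hXa _] := hX.
have := hlam_nonneg t ht; rewrite le_eqVlt => /predU1P[lt0|//].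
have [t' ht' lt'] := hlam_nz.
have lt'p : 0 < lam t' by rewrite lt_neqAle eq_sym lt' hlam_nonneg.
have FT : forall s, (s <= T)%N -> F s setT.
  move=> s sT; case: (hF.1 s sT) => [[G0 GC _] _].
  by have := GC set0 G0; rewrite setD0.
have It'p : 0 < \int[P]_(w in setT) derive1 (u t') (disc r X t' w).
  have [m [M hM]] := disc_props hF hr_pred hr_nonneg _ _ hXa _ ht'.
  have [c c0 hc] := @cont_pos_lb R _ (hu_C1 t' ht') (hu_pos t' ht') (- M) M.
  apply: lt_le_trans c0 _; rewrite -(@Rint_cstP _ _ _ P c).
  apply: ae_le_Rint.
  - apply: (@int_bdd _ _ _ P _ `|c|); first exact: measurable_cst.
    by apply: aeW => w.
  - exact: intD X hX t' ht'.
  - by apply: (filterS _ hM) => w hw; apply: hc; rewrite -ler_norml.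
have t1 : (1 <= t)%N by case/andP: ht.
have t'1 : (1 <= t')%N by case/andP: ht'.
have tT : (t <= T)%N by case/andP: ht.
have t'T : (t' <= T)%N by case/andP: ht'.
case: (ltngtP t t') => htt.
- have E := (@key d Omega R P T F r K hF hr_pred hr_nonneg hK u hu_der hu_C1 W lam X hlam_nonneg hX t t' setT t1 htt t'T (FT t tT)).
  rewrite -lt0 mul0r in E.
  by have := mulr_gt0 lt'p It'p; rewrite E ltxx.
- have E := (@key d Omega R P T F r K hF hr_pred hr_nonneg hK u hu_der hu_C1 W lam X hlam_nonneg hX t' t setT t'1 htt tT (FT t' t'T)).
  rewrite -lt0 mul0r in E.
  by have := mulr_gt0 lt'p It'p; rewrite -E ltxx.
- by move: lt'; rewrite -htt -lt0 eqxx.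
Qed.
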